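(* Every binary orchard network is tree-based.
   Context: A (directed phylogenetic) network on a finite taxa set $X$ is a directed acyclic graph without parallel arcs whose nodes are of the following types: a unique root (indegree 0, outdegree 1); tree nodes (indegree 1, outdegree at least 2); reticulations (indegree at least 2, outdegree 1); leaves (indegree 1, outdegree 0), the leaves being bijectively labelled by $X$. A network is binary if every tree node and every reticulation has total degree (indegree plus outdegree) exactly 3. A tree is a network without reticulations. Orchard networks: An ordered pair of leaves $(x,y)$ is a cherry if $x$ and $y$ have a common parent; it is a reticulated cherry if the parent $p_x$ of $x$ is a reticulation and $p_x$ and $y$ have a common parent. Let $p_x,p_y$ be the parents of $x,y$. Reducing $(x,y)$ in a network $N$: if $(x,y)$ is a cherry, delete $x$ and suppress $p_x$ if it now has indegree 1 and outdegree 1; if $(x,y)$ is a reticulated cherry, delete the arc $(p_y,p_x)$ and suppress any resulting node of indegree 1 and outdegree 1; otherwise do nothing. (Suppressing a node $v$ with one parent $u$ and one child $w$ means deleting $v$ and adding the arc $(u,w)$.) For a sequence $S$ of ordered pairs, $NS$ denotes the result of reducing the pairs of $S$ in order. $N$ is orchard if there is a sequence $S$ such that $NS$ is a tree with exactly one leaf. Tree-based: A binary network $N$ is tree-based with base tree $T$ (a binary tree on the same taxa) if $N$ can be obtained from $T$ by: (i) replacing some arcs of $T$ by directed paths whose internal nodes (attachment points) have indegree 1 and outdegree 1; (ii) adding arcs (linking arcs) between attachment points so that no node has total degree greater than 3 and the graph stays acyclic; (iii) suppressing all attachment points not incident to a linking arc. *)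

(* Defs.v *)
From mathcomp Require Import all_boot.
From mathcomp Require Import finmap.
Set Implicit Arguments. Unset Strict Implicit. Unset Printing Implicit Defensive.
Local Open Scope fset_scope.

(* A finite directed graph: nodes are natural numbers, arcs a finite set of
   ordered pairs (so there are never parallel arcs). *)
Record dgraph := DGraph { verts : {fset nat}; arcs : {fset (nat * nat)} }.

Definition in_arcs (G : dgraph) (v : nat) := [fset a in arcs G | a.2 == v].
Definition out_arcs (G : dgraph) (v : nat) := [fset a in arcs G | a.1 == v].
Definition indeg G v := #|` in_arcs G v|.
Definition outdeg G v := #|` out_arcs G v|.
Definition parents G v : {fset nat} := [fset a.1 | a in in_arcs G v].
Definition children G v : {fset nat} := [fset a.2 | a in out_arcs G v].

Inductive reach (G : dgraph) : nat -> nat -> Prop :=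
| reach_arc u v : (u, v) \in arcs G -> reach G u v
| reach_trans u v w : reach G u v -> reach G v w -> reach G u w.

Definition acyclic G := forall v, ~ reach G v v.

Definition is_rootb G v := (v \in verts G) && (indeg G v == 0) && (outdeg G v == 1).
Definition is_treenodeb G v := (v \in verts G) && (indeg G v == 1) && (1 < outdeg G v)%N.
Definition is_reticb G v := (v \in verts G) && (1 < indeg G v)%N && (outdeg G v == 1).
Definition is_leafb G v := (v \in verts G) && (indeg G v == 1) && (outdeg G v == 0).

Definition is_dnet (G : dgraph) : Prop :=
  (forall a, a \in arcs G -> (a.1 \in verts G) /\ (a.2 \in verts G)) /\
  acyclic G /\
  (exists r, is_rootb G r /\ forall v, v \in verts G -> indeg G v = 0 -> v = r) /\
  (forall v, v \in verts G ->
     [|| is_rootb G v, is_treenodeb G v, is_reticb G v | is_leafb G v]).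

Definition is_network (X : finType) (G : dgraph) (lbl : X -> nat) : Prop :=
  is_dnet G /\ injective lbl /\ (forall x, is_leafb G (lbl x)) /\
  (forall v, is_leafb G v -> exists x, lbl x = v).

Definition is_binary (G : dgraph) : Prop :=
  forall v, (is_treenodeb G v || is_reticb G v) -> (indeg G v + outdeg G v)%N = 3%N.

Definition no_retic (G : dgraph) : Prop := forall v, ~~ is_reticb G v.

Definition binary_network (X : finType) G (lbl : X -> nat) :=
  is_network G lbl /\ is_binary G.
Definition binary_tree (X : finType) G (lbl : X -> nat) :=
  binary_network G lbl /\ no_retic G.

(* the (first) parent of v; for a leaf this is its unique parent *)
Definition par G v : nat := head 0%N (enum_fset (parents G v)).
Definition chld G v : nat := head 0%N (enum_fset (children G v)).

Definition suppress (G : dgraph) (v : nat) : dgraph :=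
  if (indeg G v == 1) && (outdeg G v == 1) then
    let u := par G v in let w := chld G v in
    DGraph (verts G `\ v) (((arcs G `\ (u, v)) `\ (v, w)) `|` [fset (u, w)])
  else G.

Definition del_vertex (G : dgraph) (x : nat) : dgraph :=
  DGraph (verts G `\ x) [fset a in arcs G | (a.1 != x) && (a.2 != x)].

Definition del_arc (G : dgraph) (a : nat * nat) : dgraph :=
  DGraph (verts G) (arcs G `\ a).

Definition cherryb G x y :=
  [&& is_leafb G x, is_leafb G y, x != y & par G x == par G y].
Definition ret_cherryb G x y :=
  [&& is_leafb G x, is_leafb G y, x != y, is_reticb G (par G x)
    & (par G y, par G x) \in arcs G].

Definition reduce_pair (G : dgraph) (x y : nat) : dgraph :=
  if cherryb G x y then suppress (del_vertex G x) (par G x)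
  else if ret_cherryb G x y then
    suppress (suppress (del_arc G (par G y, par G x)) (par G x)) (par G y)
  else G.

Definition reduce_seq (G : dgraph) (S : seq (nat * nat)) : dgraph :=
  foldl (fun H p => reduce_pair H p.1 p.2) G S.

Definition nb_leaves G := #|` [fset v in verts G | is_leafb G v]|.

Definition orchard (X : finType) (G : dgraph) (lbl : X -> nat) : Prop :=
  exists S : seq (X * X),
    let H := reduce_seq G [seq (lbl p.1, lbl p.2) | p <- S] in
    is_dnet H /\ no_retic H /\ nb_leaves H = 1%N.

(* S is obtained from T by replacing arcs by directed paths (iterated
   subdivision of arcs with fresh nodes) *)
Inductive subdivision (T : dgraph) : dgraph -> Prop :=
| subdiv_refl : subdivision T T
| subdiv_step S u v w : subdivision T S -> (u, v) \in arcs S -> w \notin verts S ->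
    subdivision T (DGraph (w |` verts S)
                          ((arcs S `\ (u, v)) `|` [fset (u, w); (w, v)])).

Definition lab_iso (X : finType) (G1 : dgraph) (l1 : X -> nat)
    (G2 : dgraph) (l2 : X -> nat) : Prop :=
  exists f : nat -> nat,
    {in verts G1 &, injective f} /\
    [fset f v | v in verts G1] = verts G2 /\
    (forall u v, u \in verts G1 -> v \in verts G1 ->
       ((u, v) \in arcs G1) = ((f u, f v) \in arcs G2)) /\
    (forall x, f (l1 x) = l2 x).

Definition tree_based (X : finType) (N : dgraph) (lbl : X -> nat) : Prop :=
  exists (T : dgraph) (lT : X -> nat), binary_tree T lT /\
  exists (S : dgraph) (L : {fset nat * nat}),
    subdivision T S /\
    let att := verts S `\` verts T in
    (forall a, a \in L -> (a.1 \in att) /\ (a.2 \in att) /\ (a \notin arcs S)) /\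
    let H := DGraph (verts S) (arcs S `|` L) in
    (forall v, (indeg H v + outdeg H v <= 3)%N) /\ acyclic H /\
    let unused := [fset v in att | ~~ [exists a : L, ((val a).1 == v) || ((val a).2 == v)]] in
    lab_iso (foldl suppress H (enum_fset unused)) lT N lbl.

(* Main.v *)
Require Import Defs.
From mathcomp Require Import all_boot finmap.
From mathcomp Require Import zify.
Set Implicit Arguments. Unset Strict Implicit. Unset Printing Implicit Defensive.
Local Open Scope fset_scope.

Ltac plia := repeat match goal with H : ?T |- _ => match type of T with Prop => clear H end end;
  repeat match goal with x := _ |- _ => progress fold x end; lia.

Definition cnt (A : {fset nat * nat}) (P : pred (nat * nat)) := #|` [fset a in A | P a]|.

Lemma cnt_D1 A P c : c \in A -> (cnt (A `\ c) P + P c = cnt A P)%N.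
Proof.
move=> Hc; rewrite /cnt.
have -> : [fset a in A `\ c | P a] = [fset a in A | P a] `\ c.
  by apply/fsetP=> a; rewrite !inE; case: (a == c); rewrite ?andbF ?andbT.
rewrite [X in _ = X](cardfsD1 c) !inE Hc /=; lia.
Qed.

Lemma cnt_U1 A P b : b \notin A -> cnt (A `|` [fset b]) P = (cnt A P + P b)%N.
Proof.
move=> Hb; rewrite /cnt; case Pb: (P b).
- have -> : [fset a in A `|` [fset b] | P a] = b |` [fset a in A | P a].
    apply/fsetP=> a; rewrite !inE; case: (eqVneq a b) => [->|Hab]; rewrite ?Pb ?orbT ?orbF ?andbT //=.
    idtac.
  by rewrite cardfsU1 !inE (negbTE Hb) /=; lia.
- have -> : [fset a in A `|` [fset b] | P a] = [fset a in A | P a].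
    apply/fsetP=> a; rewrite !inE; case: (eqVneq a b) => [->|Hab]; rewrite ?Pb ?andbF ?orbF //=.
  by rewrite /= addn0.
Qed.

Lemma cnt_sub A B P : B `<=` A -> cnt A P = (cnt (A `\` B) P + cnt B P)%N.
Proof.
move=> HB; rewrite /cnt.
have -> : [fset a in A `\` B | P a] = [fset a in A | P a] `\` [fset a in B | P a].
  apply/fsetP=> a; rewrite !inE; case: (a \in B); case: (P a); rewrite /= ?andbF ?andbT //.
have S : [fset a in B | P a] `<=` [fset a in A | P a].
  apply/fsubsetP=> z; rewrite !inE => /andP[zB ->]; by rewrite (fsubsetP HB).
rewrite cardfsDS //; have := fsubset_leq_card S; lia.
Qed.

Lemma cnt0 P : cnt fset0 P = 0%N.
Proof. rewrite /cnt; apply/eqP; rewrite cardfs_eq0; apply/eqP/fsetP=> a; by rewrite !inE. Qed.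

Section Card.
Variable T : choiceType.
Implicit Types A : {fset T}.
Lemma card1_eq A x y : #|` A| = 1%N -> x \in A -> y \in A -> x = y.
Proof. by move/eqP/cardfs1P=> [z ->]; rewrite !inE => /eqP -> /eqP ->. Qed.
Lemma card_pos A x : x \in A -> (0 < #|` A|)%N.
Proof. by move=> Hx; rewrite lt0n cardfs_eq0; apply/eqP=> E; move: Hx; rewrite E inE. Qed.
Lemma card_ge2 A a b : a \in A -> b \in A -> a != b -> (2 <= #|` A|)%N.
Proof.
move=> Ha Hb Hab; have S : [fset a; b] `<=` A.
  by apply/fsubsetP=> z; rewrite !inE => /orP[]/eqP->.
have := fsubset_leq_card S; by rewrite cardfs2 Hab.
Qed.
Lemma card2_cases A a b c : #|` A| = 2%N -> a \in A -> b \in A -> a != b -> c \in A -> c = a \/ c = b.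
Proof.
move=> H2 Ha Hb Hab Hc; case: (eqVneq c a) => [->|Hca]; first by left.
right; apply: (@card1_eq (A `\ a)); last by rewrite !inE eq_sym Hab.
  by move: H2; rewrite (cardfsD1 a) Ha; lia.
by rewrite !inE Hca.
Qed.
Lemma card1_ex A : #|` A| = 1%N -> exists x, x \in A.
Proof. by move/eqP/cardfs1P=> [z ->]; exists z; rewrite inE. Qed.
End Card.

Lemma head_in (A : {fset nat}) x : x \in A -> head 0%N (enum_fset A) \in A.
Proof.
move=> Hx. have : x \in enum_fset A by []. case E: (enum_fset A) => [|h t] //=.
move=> _. have : h \in enum_fset A by rewrite E mem_head. by [].
Qed.

Lemma indegE G v : indeg G v = cnt (arcs G) (fun a => a.2 == v). Proof. by []. Qed.
Lemma outdegE G v : outdeg G v = cnt (arcs G) (fun a => a.1 == v). Proof. by []. Qed.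

Lemma in1 G u v a : indeg G v = 1%N -> (u, v) \in arcs G -> a \in arcs G -> a.2 = v -> a = (u, v).
Proof.
move=> H1 Huv Ha Hav; by apply: (card1_eq H1); rewrite /in_arcs /out_arcs !inE ?Ha ?Huv ?Hav /= ?eqxx.
Qed.
Lemma out1 G v w a : outdeg G v = 1%N -> (v, w) \in arcs G -> a \in arcs G -> a.1 = v -> a = (v, w).
Proof.
move=> H1 Huv Ha Hav; by apply: (card1_eq H1); rewrite /in_arcs /out_arcs !inE ?Ha ?Huv ?Hav /= ?eqxx.
Qed.
Lemma out2 G v w1 w2 a : outdeg G v = 2%N -> (v, w1) \in arcs G -> (v, w2) \in arcs G -> w1 != w2 ->
  a \in arcs G -> a.1 = v -> a = (v, w1) \/ a = (v, w2).
Proof.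
move=> H2 H1 H2' Hw Ha Hav; apply: (card2_cases H2); rewrite /in_arcs /out_arcs ?inE ?H1 ?H2' ?Ha ?Hav /= ?eqxx //.
by apply: contra Hw => /eqP [->].
Qed.
Lemma in2 G v u1 u2 a : indeg G v = 2%N -> (u1, v) \in arcs G -> (u2, v) \in arcs G -> u1 != u2 ->
  a \in arcs G -> a.2 = v -> a = (u1, v) \/ a = (u2, v).
Proof.
move=> H2 H1 H2' Hw Ha Hav; apply: (card2_cases H2); rewrite /in_arcs /out_arcs ?inE ?H1 ?H2' ?Ha ?Hav /= ?eqxx //.
by apply: contra Hw => /eqP [->].
Qed.

Lemma par_eq G u v : indeg G v = 1%N -> (u, v) \in arcs G -> par G v = u.
Proof.
move=> H1 Huv; rewrite /par.
have Hu : u \in parents G v by by apply/imfsetP; exists (u, v) => //; rewrite /in_arcs !inE Huv /= eqxx.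
move: (head_in Hu) => /imfsetP [a]; rewrite /in_arcs /out_arcs !inE => /andP [Ha /eqP Hav] ->.
by rewrite (in1 H1 Huv Ha Hav).
Qed.
Lemma chld_eq G v w : outdeg G v = 1%N -> (v, w) \in arcs G -> chld G v = w.
Proof.
move=> H1 Huv; rewrite /chld.
have Hu : w \in children G v by by apply/imfsetP; exists (v, w) => //; rewrite /out_arcs !inE Huv /= eqxx.
move: (head_in Hu) => /imfsetP [a]; rewrite /in_arcs /out_arcs !inE => /andP [Ha /eqP Hav] ->.
by rewrite (out1 H1 Huv Ha Hav).
Qed.

Lemma suppress_eq G u v w : indeg G v = 1%N -> outdeg G v = 1%N -> (u, v) \in arcs G -> (v, w) \in arcs G ->
  suppress G v = DGraph (verts G `\ v) (((arcs G `\ (u, v)) `\ (v, w)) `|` [fset (u, w)]).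
Proof.
move=> Hi Ho Huv Hvw; rewrite /suppress Hi Ho /= (par_eq Hi Huv) (chld_eq Ho Hvw) //.
Qed.

Lemma reach_sub G H : (forall a, a \in arcs H -> reach G a.1 a.2) ->
  forall u v, reach H u v -> reach G u v.
Proof.
move=> Hs u v; elim=> [x y /Hs //|x y z _ IH1 _ IH2]; exact: reach_trans IH1 IH2.
Qed.

Lemma noloop G u : acyclic G -> (u, u) \notin arcs G.
Proof. by move=> Ha; apply/negP=> H; apply: (Ha u); apply: reach_arc. Qed.
Lemma no2cyc G u v : acyclic G -> (u, v) \in arcs G -> (v, u) \in arcs G -> False.
Proof. by move=> Ha H1 H2; apply: (Ha u); apply: reach_trans (reach_arc H1) (reach_arc H2). Qed.
Lemma arc_neq G u v : acyclic G -> (u, v) \in arcs G -> u != v.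
Proof. by move=> Ha H; apply/eqP=> E; move: H; rewrite E; apply/negP/noloop. Qed.

Lemma cnt0_nin A P a : cnt A P = 0%N -> a \in A -> P a -> False.
Proof.
move=> H Ha Pa; have := @card_pos _ [fset a in A | P a] a.
rewrite !inE Ha Pa /= => /(_ isT); by rewrite -/(cnt A P) H.
Qed.
Lemma endpoints_deg G v : (forall a, a \in arcs G -> (a.1 \in verts G) /\ (a.2 \in verts G)) ->
  v \notin verts G -> indeg G v = 0%N /\ outdeg G v = 0%N.
Proof.
move=> He Hv; split; apply/eqP; rewrite cardfs_eq0; apply/eqP/fsetP=> a; rewrite !inE;
  apply/negP => /andP [Ha /eqP Hav]; have [H1 H2] := He a Ha; move: Hv; by rewrite -Hav ?H1 ?H2.
Qed.

Lemma node_types G v : is_dnet G -> is_binary G -> v \in verts G ->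
  [\/ indeg G v = 0%N /\ outdeg G v = 1%N, indeg G v = 1%N /\ outdeg G v = 2%N,
      indeg G v = 2%N /\ outdeg G v = 1%N | indeg G v = 1%N /\ outdeg G v = 0%N].
Proof.
move=> [_ [_ [_ Ht]]] Hb Hv; have Hs := Hb v; move: (Ht v Hv).
rewrite /is_rootb /is_treenodeb /is_reticb /is_leafb Hv /=.
case/or4P => [/andP[/eqP -> /eqP ->]|/andP[/eqP H1 H2]|/andP[H1 /eqP H2]|/andP[/eqP -> /eqP ->]].
- by constructor 1.
- move: Hs; rewrite /is_treenodeb Hv H1 H2 /= => /(_ isT) Hs; constructor 2; lia.
- move: Hs; rewrite /is_treenodeb /is_reticb Hv H1 H2 /= orbT => /(_ isT) Hs; constructor 3; lia.
- by constructor 4.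
Qed.

Lemma types_same G G2 z : z \in verts G2 -> z \in verts G -> indeg G2 z = indeg G z -> outdeg G2 z = outdeg G z ->
  [/\ is_rootb G2 z = is_rootb G z, is_treenodeb G2 z = is_treenodeb G z,
      is_reticb G2 z = is_reticb G z & is_leafb G2 z = is_leafb G z].
Proof.
by move=> H1 H2 Hi Ho; rewrite /is_rootb /is_treenodeb /is_reticb /is_leafb H1 H2 Hi Ho.
Qed.

Lemma transfer G G2 : is_dnet G -> is_binary G ->
 verts G2 `<=` verts G ->
 (forall z, z \in verts G2 -> indeg G2 z = indeg G z /\ outdeg G2 z = outdeg G z) ->
 (forall a, a \in arcs G2 -> a.1 \in verts G2 /\ a.2 \in verts G2) ->
 (forall a, a \in arcs G2 -> reach G a.1 a.2) ->
 (forall v, v \in verts G -> indeg G v = 0%N -> v \in verts G2) ->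
 is_dnet G2 /\ is_binary G2.
Proof.
move=> HG Hb Hsub Hdeg He Hr Hroot.
have [He0 [Hac [[r [Hr1 Hr2]] Ht]]] := HG.
have same : forall z, z \in verts G2 ->
  [/\ is_rootb G2 z = is_rootb G z, is_treenodeb G2 z = is_treenodeb G z,
      is_reticb G2 z = is_reticb G z & is_leafb G2 z = is_leafb G z].
  move=> z Hz; have [Hi Ho] := Hdeg z Hz; exact: types_same Hz (fsubsetP Hsub z Hz) Hi Ho.
split; last first.
  move=> v; case Hv: (v \in verts G2); last by rewrite /is_treenodeb /is_reticb Hv.
  have [_ -> -> _] := same v Hv; have [Hi Ho] := Hdeg v Hv; rewrite Hi Ho; exact: Hb.
split => //; split.
  move=> v Hv; apply: (Hac v); exact: (reach_sub Hr).
split; last first.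
  move=> v Hv; have [-> -> -> ->] := same v Hv; exact: Ht (fsubsetP Hsub v Hv).
have Hrv : r \in verts G2.
  by have /andP[/andP[Hrv0 /eqP Hri] _] := Hr1; exact: Hroot Hrv0 Hri.
exists r; split; first by have [-> _ _ _] := same r Hrv.
move=> v Hv Hi; apply: Hr2; first exact: (fsubsetP Hsub v Hv).
by have [<- _] := Hdeg v Hv.
Qed.

Definition adm G (E : {fset nat * nat}) :=
 [/\ E `<=` arcs G, (forall a, a \in E -> is_reticb G a.2),
     (forall v, is_reticb G v -> cnt E (fun a => a.2 == v) = 1%N) &
     (forall u w, (u, w) \in E -> exists w', ((u, w') \in arcs G) && ((u, w') \notin E))].

Lemma par_arc G x : indeg G x = 1%N -> (par G x, x) \in arcs G.
Proof.
move=> H1; have [a] := card1_ex H1; rewrite /in_arcs !inE => /andP [Ha /eqP Hax].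
have E : a = (a.1, x) by rewrite -Hax; case: a {Ha Hax}.
rewrite E in Ha; by rewrite (par_eq H1 Ha).
Qed.
Lemma out0_noarc G v w : outdeg G v = 0%N -> (v, w) \in arcs G -> False.
Proof. move=> H Ha; apply: (cnt0_nin H Ha); exact: eqxx. Qed.
Lemma in0_noarc G v w : indeg G w = 0%N -> (v, w) \in arcs G -> False.
Proof. move=> H Ha; apply: (cnt0_nin H Ha); exact: eqxx. Qed.

Lemma cnt_chain2 A P c1 c2 b : c1 \in A -> c2 \in A `\ c1 -> b \notin (A `\ c1) `\ c2 ->
  (cnt (((A `\ c1) `\ c2) `|` [fset b]) P + P c1 + P c2 = cnt A P + P b)%N.
Proof.
move=> H1 H2 Hb; rewrite cnt_U1 // -(cnt_D1 P H1) -(cnt_D1 P H2); plia.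
Qed.

Lemma cnt_chain3 A P c1 c2 c3 b : c1 \in A -> c2 \in A `\ c1 -> c3 \in (A `\ c1) `\ c2 ->
  b \notin ((A `\ c1) `\ c2) `\ c3 ->
  (cnt ((((A `\ c1) `\ c2) `\ c3) `|` [fset b]) P + P c1 + P c2 + P c3 = cnt A P + P b)%N.
Proof.
move=> H1 H2 H3 Hb; rewrite cnt_U1 // -(cnt_D1 P H1) -(cnt_D1 P H2) -(cnt_D1 P H3); plia.
Qed.

Lemma neqF (T : eqType) (a b : T) : a != b -> (b == a) = false.
Proof. by rewrite eq_sym => /negbTE. Qed.

Lemma leafP G x : is_leafb G x -> [/\ x \in verts G, indeg G x = 1%N & outdeg G x = 0%N].
Proof. by case/andP=> /andP[-> /eqP ->] /eqP ->. Qed.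
Lemma reticP G x : is_reticb G x -> [/\ x \in verts G, (1 < indeg G x)%N & outdeg G x = 1%N].
Proof. by case/andP=> /andP[-> ->] /eqP ->. Qed.

Lemma cherry_case G x y : is_dnet G -> is_binary G -> cherryb G x y ->
  is_dnet (reduce_pair G x y) /\ is_binary (reduce_pair G x y) /\
  (forall E, adm (reduce_pair G x y) E -> exists E', adm G E').
Proof.
move=> HG Hb Hc; rewrite /reduce_pair Hc.
have [He [Hac _]] := HG.
move: Hc => /and4P [Lx Ly Hxy /eqP Hp].
have [Hxv Hxi Hxo] := leafP Lx; have [Hyv Hyi Hyo] := leafP Ly.
set p := par G x in Hp *.
have Hpx : (p, x) \in arcs G := par_arc Hxi.
have Hpy : (p, y) \in arcs G by rewrite Hp; exact: par_arc Hyi.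
have Hpv : p \in verts G := (He _ Hpx).1.
have Hpo2 : (2 <= outdeg G p)%N.
  apply: (@card_ge2 _ _ (p, x) (p, y)); rewrite ?inE ?Hpx ?Hpy ?eqxx //.
  by apply: contra Hxy => /eqP [->].
have [Hpi Hpo] : indeg G p = 1%N /\ outdeg G p = 2%N.
  by case: (node_types HG Hb Hpv) => [] [H1 H2]; move: H1 H2 Hpo2; plia.
set u := par G p.
have Hup : (u, p) \in arcs G := par_arc Hpi.
have Huv : u \in verts G := (He _ Hup).1.
have Hpx' : p != x := arc_neq Hac Hpx.
have Hpy' : p != y := arc_neq Hac Hpy.
have Hup' : u != p := arc_neq Hac Hup.
have Hux : u != x by apply/eqP=> E; rewrite E in Hup; exact: out0_noarc Hxo Hup.
have Huy : u != y by apply/eqP=> E; rewrite E in Hup; exact: out0_noarc Hyo Hup.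
have Hdel : del_vertex G x = DGraph (verts G `\ x) (arcs G `\ (p, x)).
  rewrite /del_vertex; congr DGraph; apply/fsetP => -[a1 a2]; rewrite !inE /=.
  case Ha: ((a1, a2) \in arcs G); rewrite /= ?andbF ?andbT //.
  have -> : a1 != x by apply/eqP=> E; rewrite E in Ha; exact: out0_noarc Hxo Ha.
  case: (eqVneq (a1, a2) (p, x)) => [[E1 E2]|Hne] /=; first by rewrite E2 eqxx.
  apply/negP => /eqP E; move: Hne; by rewrite (in1 Hxi Hpx Ha E) eqxx.
rewrite Hdel.
set A1 := arcs G `\ (p, x).
have Hup1 : (u, p) \in A1 by rewrite !inE Hup andbT; apply: contra Hup' => /eqP [->].
have Hpy1 : (p, y) \in A1 by rewrite !inE Hpy andbT; by apply: contra Hxy => /eqP [->].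
have Hc1 := cnt_D1 (fun a => a.2 == p) Hpx.
have Hc2 := cnt_D1 (fun a => a.1 == p) Hpx.
rewrite /= eqxx in Hc2; rewrite /= eq_sym (negbTE Hpx') in Hc1.
have Hi1 : indeg (DGraph (verts G `\ x) A1) p = 1%N by rewrite indegE /= /A1; move: Hpi Hc1; rewrite indegE /= addn0; plia.
have Ho1 : outdeg (DGraph (verts G `\ x) A1) p = 1%N by rewrite outdegE /= /A1; move: Hpo Hc2; rewrite outdegE /=; plia.
rewrite (suppress_eq Hi1 Ho1 Hup1 Hpy1) /=.
set G2 := DGraph _ _.
have Huyn : (u, y) \notin arcs G.
  apply/negP => H; have := in1 Hyi Hpy H erefl; case=> E; by rewrite E eqxx in Hup'.
have Hpy2 : (p, y) \in A1 `\ (u, p) by rewrite in_fsetD1 Hpy1 andbT; apply: contra Hup' => /eqP [->].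
have Hb3 : (u, y) \notin (A1 `\ (u, p)) `\ (p, y) by rewrite !inE (negbTE Huyn) !andbF.
have key P := cnt_chain3 P Hpx Hup1 Hpy2 Hb3.
have memA2 a : (a \in arcs G2) = (a == (u, y)) || [&& a != (p, y), a != (u, p), a != (p, x) & a \in arcs G].
  by rewrite /G2 /= !inE orbC.
have memV z : (z \in verts G2) = [&& z != p, z != x & z \in verts G] by rewrite /G2 /= !inE.
have Hdeg z : z \in verts G2 -> indeg G2 z = indeg G z /\ outdeg G2 z = outdeg G z.
  rewrite memV => /and3P [/negbTE zp /negbTE zx _].
  have := key (fun a => a.2 == z); have := key (fun a => a.1 == z).
  rewrite /= !(eq_sym _ z) zp zx /= !indegE !outdegE /= -/A1; plia.
have Hsub : verts G2 `<=` verts G by apply/fsubsetP => z; rewrite memV => /and3P[].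
have Hend : forall a, a \in arcs G2 -> a.1 \in verts G2 /\ a.2 \in verts G2.
  move=> [a1 a2]; rewrite memA2 => /orP [/eqP [-> ->]|/and4P [n1 n2 n3 Ha]].
    by rewrite !memV Huv Hyv Hup' Hux eq_sym Hpy' eq_sym Hxy.
  have [v1 v2] := He _ Ha; rewrite /= in v1 v2; rewrite !memV v1 v2 !andbT.
  have a1x : a1 != x by apply/eqP=> E; rewrite E in Ha; exact: out0_noarc Hxo Ha.
  have a2x : a2 != x by apply: contra n3 => /eqP E; apply/eqP; exact: in1 Hxi Hpx Ha E.
  have a2p : a2 != p by apply: contra n2 => /eqP E; apply/eqP; exact: in1 Hpi Hup Ha E.
  have a1p : a1 != p.
    apply/eqP=> E; have [] := out2 Hpo Hpx Hpy Hxy Ha E => F; by rewrite F eqxx in n1 n3.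
  by rewrite a1x a2x a2p a1p.
have Hreach : forall a, a \in arcs G2 -> reach G a.1 a.2.
  move=> [a1 a2]; rewrite memA2 => /orP [/eqP [-> ->] /=|/and4P [_ _ _ Ha]]; last exact: reach_arc.
  exact: reach_trans (reach_arc Hup) (reach_arc Hpy).
have Hroot : forall v, v \in verts G -> indeg G v = 0%N -> v \in verts G2.
  move=> v Hv Hi; rewrite memV Hv andbT; apply/andP; split; apply/eqP => E; move: Hi; by rewrite E ?Hpi ?Hxi.
have [HG2 Hb2] := transfer HG Hb Hsub Hdeg Hend Hreach Hroot.
split => //; split => // E [HEs HEr HEc HEw]; exists E.
have retic_tr z : z \in verts G2 -> is_reticb G2 z = is_reticb G z.
  move=> Hz; have [Hi Ho] := Hdeg z Hz; by have [_ _ -> _] := types_same Hz (fsubsetP Hsub z Hz) Hi Ho.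
have HEa : forall a, a \in E -> a \in arcs G /\ a != (u, y) /\ a \in arcs G2.
  move=> a Ha; have Ha2 := fsubsetP HEs a Ha; have := HEr a Ha.
  case: (eqVneq a (u, y)) => [-> /reticP [Hyv2 Hyi2 _]|Hne _].
    by move: Hyi2; rewrite (Hdeg y Hyv2).1 Hyi.
  have HaG : a \in arcs G by move: (Ha2); rewrite memA2 (negbTE Hne) /= => /and4P [_ _ _ ->].
  by split; [|split].
split.
- by apply/fsubsetP => a /HEa [].
- move=> a Ha; have := HEr a Ha; have [Hv _] := reticP (HEr a Ha); by rewrite retic_tr.
- move=> v Hv; apply: HEc; have [Hvv Hvi _] := reticP Hv.
  have Hv2 : v \in verts G2.
    rewrite memV Hvv andbT; apply/andP; split; apply/eqP => Ev; move: Hvi; by rewrite Ev ?Hpi ?Hxi.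
  by rewrite retic_tr.
- move=> u0 w Hw; have [w' /andP [H1 H2]] := HEw u0 w Hw.
  move: H1; rewrite memA2 => /orP [/eqP [-> _]|/and4P [_ _ _ H1]]; last by exists w'; rewrite H1 H2.
  exists p; rewrite Hup /=; apply/negP => /HEa [_ [_]]; rewrite memA2 !eqxx /= andbF orbF.
  by move=> /eqP [Ep]; rewrite Ep eqxx in Hpy'.
Qed.
Lemma ret_case G x y : is_dnet G -> is_binary G -> ret_cherryb G x y ->
  is_dnet (reduce_pair G x y) /\ is_binary (reduce_pair G x y) /\
  (forall E, adm (reduce_pair G x y) E -> exists E', adm G E').
Proof.
move=> HG Hb Hc.
have [He [Hac _]] := HG.
move: (Hc) => /and5P [Lx Ly Hxy Rpx Hyx].
have [Hxv Hxi Hxo] := leafP Lx; have [Hyv Hyi Hyo] := leafP Ly.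
set px := par G x in Rpx Hyx *. set py := par G y in Hyx *.
have Hpyx' : py != px := arc_neq Hac Hyx.
have Hnc : cherryb G x y = false.
  by rewrite /cherryb -/px -/py [px == py]eq_sym (negbTE Hpyx') !andbF.
rewrite /reduce_pair Hnc Hc -/px -/py.
have Hpxx : (px, x) \in arcs G := par_arc Hxi.
have Hpyy : (py, y) \in arcs G := par_arc Hyi.
have [Hpxv Hpxi1 Hpxo] := reticP Rpx.
have Hpxi : indeg G px = 2%N.
  by case: (node_types HG Hb Hpxv) => [] [H1 H2]; move: H1 H2 Hpxi1 Hpxo; plia.
have Hpyv : py \in verts G := (He _ Hyx).1.
have Hypx : y != px by apply/eqP=> E; move: Hyi; rewrite E Hpxi.
have [Hpyi Hpyo] : indeg G py = 1%N /\ outdeg G py = 2%N.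
  have Hpyo2 : (2 <= outdeg G py)%N.
    apply: (@card_ge2 _ _ (py, y) (py, px)); rewrite /out_arcs ?inE ?Hpyy ?Hyx ?eqxx //.
    by apply: contra Hypx => /eqP [->].
  by case: (node_types HG Hb Hpyv) => [] [H1 H2]; move: H1 H2 Hpyo2; plia.
have [g Hg] : exists g, ((g, px) \in arcs G) && (g != py).
  have : (0 < #|` in_arcs G px `\ (py, px)|)%N.
    by move: (cardfsD1 (py, px) (in_arcs G px)); rewrite /in_arcs !inE Hyx eqxx /= -/(indeg G px) Hpxi; plia.
  case: (fset_0Vmem (in_arcs G px `\ (py, px))) => [->|[[a1 a2] Ha]]; first by rewrite cardfs0.
  move: Ha; rewrite /in_arcs !inE /= => /and3P [Hne Ha /eqP E]; rewrite E in Ha Hne.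
  exists a1; rewrite Ha /=; by apply: contra Hne => /eqP ->.
move: Hg => /andP [Hgpx Hgpy].
set q := par G py.
have Hqpy : (q, py) \in arcs G := par_arc Hpyi.
have Hgv : g \in verts G := (He _ Hgpx).1.
have Hqv : q \in verts G := (He _ Hqpy).1.
have Hpxx' : px != x := arc_neq Hac Hpxx.
have Hpyy' : py != y := arc_neq Hac Hpyy.
have Hgpx' : g != px := arc_neq Hac Hgpx.
have Hqpy' : q != py := arc_neq Hac Hqpy.
have Hxpy : x != py by apply/eqP=> E; move: Hxo; rewrite E Hpyo.
have Hqpx : q != px by apply/eqP=> E; rewrite E in Hqpy; exact: no2cyc Hac Hqpy Hyx.
have Hgx : g != x by apply/eqP=> E; rewrite E in Hgpx; exact: out0_noarc Hxo Hgpx.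
have Hgy : g != y by apply/eqP=> E; rewrite E in Hgpx; exact: out0_noarc Hyo Hgpx.
have Hqx : q != x by apply/eqP=> E; rewrite E in Hqpy; exact: out0_noarc Hxo Hqpy.
have Hqy : q != y by apply/eqP=> E; rewrite E in Hqpy; exact: out0_noarc Hyo Hqpy.
rewrite /del_arc.
set A1 := arcs G `\ (py, px).
have Hc1 := cnt_D1 (fun a => a.2 == px) Hyx.
have Hc2 := cnt_D1 (fun a => a.1 == px) Hyx.
rewrite /= eqxx in Hc1; rewrite /= (negbTE Hpyx') in Hc2.
have Hi1 : indeg (DGraph (verts G) A1) px = 1%N.
  by rewrite indegE /= /A1; move: Hpxi Hc1; rewrite indegE; plia.
have Ho1 : outdeg (DGraph (verts G) A1) px = 1%N.
  by rewrite outdegE /= /A1; move: Hpxo Hc2; rewrite outdegE /= addn0; plia.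
have Hgpx1 : (g, px) \in A1 by rewrite in_fsetD1 Hgpx andbT; apply: contra Hgpy => /eqP [->].
have Hpxx1 : (px, x) \in A1 by rewrite in_fsetD1 Hpxx andbT; apply: contra Hpyx' => /eqP [->].
rewrite (suppress_eq Hi1 Ho1 Hgpx1 Hpxx1) /=.
set A2 := ((A1 `\ (g, px)) `\ (px, x)) `|` [fset (g, x)].
have Hpxx2 : (px, x) \in A1 `\ (g, px) by rewrite in_fsetD1 Hpxx1 andbT; apply: contra Hgpx' => /eqP [->].
have Hgxn : (g, x) \notin arcs G.
  apply/negP => H; have := in1 Hxi Hpxx H erefl; case=> E; by rewrite E eqxx in Hgpx'.
have Hb3 : (g, x) \notin (A1 `\ (g, px)) `\ (px, x) by rewrite !inE (negbTE Hgxn) !andbF.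
have key1 P : (cnt A2 P + P (py, px) + P (g, px) + P (px, x) = cnt (arcs G) P + P (g, x))%N :=
  cnt_chain3 P Hyx Hgpx1 Hpxx2 Hb3.
have memA2 a : (a \in A2) = (a == (g, x)) || [&& a != (px, x), a != (g, px), a != (py, px) & a \in arcs G].
  by rewrite /A2 /A1 !inE orbC.
have Hi2 : indeg (DGraph (verts G `\ px) A2) py = 1%N.
  have := key1 (fun a => a.2 == py); rewrite /= [px == py]eq_sym (negbTE Hpyx') (negbTE Hxpy).
  rewrite indegE /=; move: Hpyi; rewrite indegE; plia.
have Ho2 : outdeg (DGraph (verts G `\ px) A2) py = 1%N.
  have := key1 (fun a => a.1 == py); rewrite /= eqxx (negbTE Hgpy) [px == py]eq_sym (negbTE Hpyx').
  by rewrite outdegE /=; move: Hpyo; rewrite outdegE; plia.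
have Hqpy2 : (q, py) \in A2.
  rewrite memA2 Hqpy andbT; apply/orP; right; apply/and3P; split.
  - by apply: contra Hxpy => /eqP [_ ->].
  - by apply: contra Hpyx' => /eqP [_ ->].
  - by apply: contra Hqpy' => /eqP [->].
have Hpyy2 : (py, y) \in A2.
  rewrite memA2 Hpyy andbT; apply/orP; right; apply/and3P; split.
  - by apply: contra Hpyx' => /eqP [->].
  - by apply: contra Hgpy => /eqP [->].
  - by apply: contra Hypx => /eqP [->].
rewrite (suppress_eq Hi2 Ho2 Hqpy2 Hpyy2) /=.
set G3 := DGraph _ _.
have Hqyn : (q, y) \notin arcs G.
  apply/negP => H; have := in1 Hyi Hpyy H erefl; case=> E; by rewrite E eqxx in Hqpy'.
have Hpyy3 : (py, y) \in A2 `\ (q, py) by rewrite in_fsetD1 Hpyy2 andbT; apply: contra Hqpy' => /eqP [->].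
have Hb4 : (q, y) \notin (A2 `\ (q, py)) `\ (py, y).
  rewrite !in_fsetD1 memA2 (negbTE Hqyn) !andbF orbF; apply/negP => /and3P [_ _ /eqP [_ E]].
  by rewrite E eqxx in Hxy.
have key2 P : (cnt (arcs G3) P + P (q, py) + P (py, y) = cnt A2 P + P (q, y))%N :=
  cnt_chain2 P Hqpy2 Hpyy3 Hb4.
have memA3 a : (a \in arcs G3) = [|| a == (q, y), a == (g, x) |
    [&& a != (py, px), a != (g, px), a != (px, x), a != (q, py), a != (py, y) & a \in arcs G]].
  rewrite /G3 /= in_fsetU in_fset1 !in_fsetD1 memA2 orbC.
  case: (eqVneq a (q, y)) => [//|n1] /=.
  case: (eqVneq a (g, x)) => [->|n2] /=.
    apply/and3P; split => //; first by apply: contra Hxy => /eqP [_ ->].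
    by apply: contra Hxpy => /eqP [_ ->].
  by case: (a != (py, px)); case: (a != (g, px)); case: (a != (px, x)); case: (a != (q, py));
     case: (a != (py, y)); case: (a \in arcs G).
have memV z : (z \in verts G3) = [&& z != py, z != px & z \in verts G] by rewrite /G3 /= !inE.
have Hdeg z : z \in verts G3 -> indeg G3 z = indeg G z /\ outdeg G3 z = outdeg G z.
  rewrite memV => /and3P [/negbTE zpy /negbTE zpx _].
  have := key1 (fun a => a.2 == z); have := key1 (fun a => a.1 == z).
  have := key2 (fun a => a.2 == z); have := key2 (fun a => a.1 == z).
  rewrite /= !(eq_sym _ z) zpy zpx /= !indegE !outdegE /=; plia.
have Hsub : verts G3 `<=` verts G by apply/fsubsetP => z; rewrite memV => /and3P[].
have Hend : forall a, a \in arcs G3 -> a.1 \in verts G3 /\ a.2 \in verts G3.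
  move=> [a1 a2]; rewrite memA3 => /or3P [/eqP [-> ->]|/eqP [-> ->]|/and5P [n1 n2 n3 n4 /andP [n5 Ha]]].
  - by rewrite !memV Hqv Hyv Hqpy' Hqpx eq_sym Hpyy' Hypx.
  - by rewrite !memV Hgv Hxv Hgpy Hgpx' Hxpy eq_sym Hpxx'.
  have [v1 v2] := He _ Ha; rewrite /= in v1 v2; rewrite !memV v1 v2 !andbT.
  have a1px : a1 != px.
    by apply: contra n3 => /eqP E; apply/eqP; exact: out1 Hpxo Hpxx Ha E.
  have a2px : a2 != px.
    have Hpyg : py != g by rewrite eq_sym.
    apply/eqP=> E; have [] := in2 Hpxi Hyx Hgpx Hpyg Ha E => F; by rewrite F eqxx in n1 n2.
  have a1py : a1 != py.
    apply/eqP=> E; have [] := out2 Hpyo Hpyy Hyx Hypx Ha E => F; by rewrite F eqxx in n5 n1.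
  have a2py : a2 != py by apply: contra n4 => /eqP E; apply/eqP; exact: in1 Hpyi Hqpy Ha E.
  by rewrite a1px a2px a1py a2py.
have Hreach : forall a, a \in arcs G3 -> reach G a.1 a.2.
  move=> [a1 a2]; rewrite memA3 => /or3P [/eqP [-> ->]|/eqP [-> ->]|/and5P [_ _ _ _ /andP [_ Ha]]] /=.
  - exact: reach_trans (reach_arc Hqpy) (reach_arc Hpyy).
  - exact: reach_trans (reach_arc Hgpx) (reach_arc Hpxx).
  - exact: reach_arc.
have Hroot : forall v, v \in verts G -> indeg G v = 0%N -> v \in verts G3.
  move=> v Hv Hi; rewrite memV Hv andbT; apply/andP; split; apply/eqP => Ev; move: Hi; by rewrite Ev ?Hpyi ?Hpxi.
have [HG3 Hb3'] := transfer HG Hb Hsub Hdeg Hend Hreach Hroot.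
split => //; split => // E [HEs HEr HEc HEw].
have retic_tr z : z \in verts G3 -> is_reticb G3 z = is_reticb G z.
  move=> Hz; have [Hi Ho] := Hdeg z Hz; by have [_ _ -> _] := types_same Hz (fsubsetP Hsub z Hz) Hi Ho.
have HEa : forall a, a \in E -> a \in arcs G /\ a \in arcs G3.
  move=> a Ha; have Ha2 := fsubsetP HEs a Ha; have := HEr a Ha.
  case: (eqVneq a (q, y)) => [-> /reticP [Hyv2 Hyi2 _]|Hne1].
    by move: Hyi2; rewrite (Hdeg y Hyv2).1 Hyi.
  case: (eqVneq a (g, x)) => [-> /reticP [Hxv2 Hxi2 _]|Hne2 _].
    by move: Hxi2; rewrite (Hdeg x Hxv2).1 Hxi.
  have HaG : a \in arcs G.
    by move: (Ha2); rewrite memA3 (negbTE Hne1) (negbTE Hne2) /= => /and5P [_ _ _ _ /andP [_ ->]].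
  by split.
have nA3 a : a \in [:: (py, px); (g, px); (px, x); (q, py); (py, y)] -> a \notin arcs G3.
  move=> Ha; rewrite !inE in Ha; rewrite memA3; apply/negP => /or3P [/eqP E1|/eqP E2|H].
  - move: Ha; rewrite E1 !xpair_eqE !eqxx /=.
    by rewrite (negbTE Hqpy') (negbTE Hypx) (negbTE Hqpx) (neqF Hxy) (neqF Hpyy') /= ?andbF.
  - move: Ha; rewrite E2 !xpair_eqE !eqxx /=.
    by rewrite (negbTE Hgpy) (neqF Hpxx') (negbTE Hgpx') (negbTE Hxpy) /= ?andbF.
  - move: H Ha => /and5P [n1 n2 n3 n4 /andP [n5 _]] /or4P [| | |/orP []] /eqP Ea;
      by move: n1 n2 n3 n4 n5; rewrite Ea !eqxx.
have Hyxn : (py, px) \notin E by apply/negP => /HEa [_]; apply/negP; apply: nA3; rewrite !inE eqxx.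
exists (E `|` [fset (py, px)]); split.
- apply/fsubsetP => a; rewrite in_fsetU in_fset1 => /orP [/HEa [] //|/eqP -> //].
- move=> a; rewrite in_fsetU in_fset1 => /orP [Ha|/eqP -> //].
  have [Hv _] := reticP (HEr a Ha); by rewrite -retic_tr // HEr.
- move=> v Hv; rewrite cnt_U1 //=.
  case: (eqVneq v px) => [Ev|Hvpx].
    suff -> : cnt E (fun a => a.2 == v) = 0%N by [].
    apply/eqP; rewrite cardfs_eq0; apply/eqP/fsetP => a; rewrite !inE.
    apply/negP => /andP [Ha /eqP Ea]; have [_ Ha3] := HEa a Ha.
    have [_ Hv3] := Hend a Ha3; by rewrite Ea Ev memV eqxx andbF in Hv3.
  rewrite /= addn0; apply: HEc.
  have [Hvv Hvi _] := reticP Hv.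
  have Hv3 : v \in verts G3.
    rewrite memV Hvv Hvpx !andbT; apply/eqP => Ev; move: Hvi; by rewrite Ev Hpyi.
  by rewrite retic_tr.
- move=> u0 w; rewrite in_fsetU in_fset1 => /orP [Hw|/eqP [-> _]]; last first.
    exists y; rewrite Hpyy /= in_fsetU in_fset1 negb_or; apply/andP; split.
      by apply/negP => /HEa [_]; apply/negP; apply: nA3; rewrite !inE eqxx !orbT.
    by apply: contra Hypx => /eqP [->].
  have [w' /andP [H1 H2]] := HEw u0 w Hw.
  have Hne a : a \in arcs G3 -> a != (py, px).
    by move=> Ha; apply: contraTneq Ha => ->; apply: nA3; rewrite !inE eqxx.
  move: (H1); rewrite memA3 => /or3P [/eqP [-> _]|/eqP [-> _]|/and5P [_ _ _ _ /andP [_ H1']]].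
  + exists py; rewrite Hqpy /= in_fsetU in_fset1 negb_or; apply/andP; split.
      by apply/negP => /HEa [_]; apply/negP; apply: nA3; rewrite !inE eqxx !orbT.
    by apply: contra Hqpy' => /eqP [->].
  + exists px; rewrite Hgpx /= in_fsetU in_fset1 negb_or; apply/andP; split.
      by apply/negP => /HEa [_]; apply/negP; apply: nA3; rewrite !inE eqxx !orbT.
    by apply: contra Hgpy => /eqP [->].
  + exists w'; rewrite H1' /= in_fsetU in_fset1 negb_or H2 /=; exact: Hne.
Qed.
Lemma orchard_adm l G : is_dnet G -> is_binary G -> is_dnet (reduce_seq G l) ->
  no_retic (reduce_seq G l) -> exists E, adm G E.
Proof.
elim: l G => [|[a b] l IH] G HG Hb /=.
  move=> _ Hnr; exists fset0; split.
  - exact: fsub0set.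
  - by move=> a; rewrite inE.
  - by move=> v Hv; have := Hnr v; rewrite Hv.
  - by move=> u w; rewrite inE.
rewrite /reduce_seq /= -/(reduce_seq (reduce_pair G a b) l) => H1 H2.
case Hc: (cherryb G a b).
  have [HG' [Hb' Hl]] := cherry_case HG Hb Hc.
  have [E HE] := IH _ HG' Hb' H1 H2; exact: Hl E HE.
case Hr: (ret_cherryb G a b).
  have [HG' [Hb' Hl]] := ret_case HG Hb Hr.
  have [E HE] := IH _ HG' Hb' H1 H2; exact: Hl E HE.
have E : reduce_pair G a b = G by rewrite /reduce_pair Hc Hr.
by rewrite E in H1 H2; exact: IH.
Qed.

Definition forest F := [/\ (forall a, a \in arcs F -> a.1 \in verts F /\ a.2 \in verts F),
  acyclic F & forall v, (indeg F v <= 1)%N].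

Lemma chld_arc G v : outdeg G v = 1%N -> (v, chld G v) \in arcs G.
Proof.
move=> H1; have [a] := card1_ex H1; rewrite /out_arcs !inE => /andP [Ha /eqP Hax].
have E : a = (v, a.2) by rewrite -Hax; case: a {Ha Hax}.
rewrite E in Ha; by rewrite (chld_eq H1 Ha).
Qed.

Lemma dgraph_eta G : G = DGraph (verts G) (arcs G).
Proof. by case: G. Qed.

Lemma subdiv_trans A B C : subdivision A B -> subdivision B C -> subdivision A C.
Proof.
move=> HAB; elim=> [//|S u v w _ IH Huv Hw]; exact: subdiv_step IH Huv Hw.
Qed.

Lemma supp_forest F v : forest F -> v \in verts F -> indeg F v = 1%N -> outdeg F v = 1%N ->
  [/\ forest (suppress F v), (forall z, (z \in verts (suppress F v)) = (z != v) && (z \in verts F)),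
      (forall z, z != v -> indeg (suppress F v) z = indeg F z /\ outdeg (suppress F v) z = outdeg F z) &
      subdivision (suppress F v) F].
Proof.
move=> [He Hac Hin] Hv Hi Ho.
set u := par F v; set w := chld F v.
have Huv : (u, v) \in arcs F := par_arc Hi.
have Hvw : (v, w) \in arcs F := chld_arc Ho.
have Huv' : u != v := arc_neq Hac Huv.
have Hvw' : v != w := arc_neq Hac Hvw.
have Huw' : u != w by apply/eqP => E; rewrite E in Huv; exact: no2cyc Hac Huv Hvw.
have Huwn : (u, w) \notin arcs F.
  apply/negP => H; have := Hin w; apply/negP; rewrite -ltnNge.
  apply: (@card_ge2 _ _ (u, w) (v, w)); rewrite /in_arcs ?inE ?H ?Hvw ?eqxx //.
  by apply: contra Huv' => /eqP [->].
rewrite (suppress_eq Hi Ho Huv Hvw).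
set F' := DGraph _ _.
have Hvw1 : (v, w) \in arcs F `\ (u, v) by rewrite in_fsetD1 Hvw andbT; apply: contra Huv' => /eqP [->].
have Hb : (u, w) \notin (arcs F `\ (u, v)) `\ (v, w) by rewrite !in_fsetD1 (negbTE Huwn) !andbF.
have key P : (cnt (arcs F') P + P (u, v) + P (v, w) = cnt (arcs F) P + P (u, w))%N :=
  cnt_chain2 P Huv Hvw1 Hb.
have memA a : (a \in arcs F') = (a == (u, w)) || [&& a != (v, w), a != (u, v) & a \in arcs F].
  by rewrite /F' /= in_fsetU in_fset1 !in_fsetD1 orbC.
have memV z : (z \in verts F') = (z != v) && (z \in verts F) by rewrite /F' /= in_fsetD1.
have Hdeg z : z != v -> indeg F' z = indeg F z /\ outdeg F' z = outdeg F z.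
  move=> /negbTE zv; have := key (fun a => a.2 == z); have := key (fun a => a.1 == z).
  rewrite /= !(eq_sym _ z) zv /= !indegE !outdegE /F' /=; plia.
have Hiv : indeg F' v = 0%N.
  have := key (fun a => a.2 == v); rewrite /= eqxx (neqF Hvw') indegE /F' /=; move: Hi; rewrite indegE; plia.
split => //.
- split.
  + move=> [a1 a2]; rewrite memA => /orP [/eqP [-> ->]|/and3P [n1 n2 Ha]].
      have [h1 _] := He _ Huv; have [_ h2] := He _ Hvw.
      by rewrite !memV h1 h2 Huv' eq_sym Hvw'.
    have [v1 v2] := He _ Ha; rewrite /= in v1 v2; rewrite /= !memV v1 v2 !andbT.
    split.
      by apply: contra n1 => /eqP E; apply/eqP; exact: out1 Ho Hvw Ha E.
    by apply: contra n2 => /eqP E; apply/eqP; exact: in1 Hi Huv Ha E.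
  + move=> z Hz; apply: (Hac z); apply: (reach_sub _ Hz) => -[a1 a2].
    rewrite memA => /orP [/eqP [-> ->]|/and3P [_ _ Ha]]; last exact: reach_arc.
    exact: reach_trans (reach_arc Huv) (reach_arc Hvw).
  + move=> z; case: (eqVneq z v) => [->|zv]; first by rewrite Hiv.
    by rewrite (Hdeg z zv).1.
- have EF : F = DGraph (v |` verts F') ((arcs F' `\ (u, w)) `|` [fset (u, v); (v, w)]).
    rewrite {1}(dgraph_eta F); congr DGraph.
      apply/fsetP => z; rewrite in_fset1U memV; case: (eqVneq z v) => [->|] //=.
    apply/fsetP => a; rewrite in_fsetU in_fsetD1 memA !inE.
    case: (eqVneq a (u, w)) => [->|n0] /=.
      by rewrite (negbTE Huwn) xpair_eqE eqxx /= (neqF Hvw') xpair_eqE (negbTE Huv').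
    case: (eqVneq a (u, v)) => [->|n1] /=; first by rewrite Huv ?orbT.
    case: (eqVneq a (v, w)) => [->|n2] /=; first by rewrite Hvw ?orbT ?andbF.
    by rewrite orbF.
  rewrite [X in subdivision _ X]EF.
  apply: subdiv_step; first exact: subdiv_refl.
  + by rewrite memA eqxx.
  + by rewrite memV eqxx.
Qed.
Lemma foldl_supp l F : forest F -> uniq l ->
  (forall v, v \in l -> [&& v \in verts F, indeg F v == 1%N & outdeg F v == 1%N]) ->
  [/\ forest (foldl suppress F l),
      (forall z, (z \in verts (foldl suppress F l)) = (z \notin l) && (z \in verts F)),
      (forall z, z \notin l -> indeg (foldl suppress F l) z = indeg F z /\
                               outdeg (foldl suppress F l) z = outdeg F z) &
      subdivision (foldl suppress F l) F].
Proof.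
elim: l F => [|v l IH] F HF /= Hu Hl.
  split => //; exact: subdiv_refl.
move/andP: Hu => [Hvl Hu].
have /and3P [Hv /eqP Hi /eqP Ho] := Hl v (mem_head v l).
have [HF' HV' HD' HS'] := supp_forest HF Hv Hi Ho.
have Hl' : forall v', v' \in l -> [&& v' \in verts (suppress F v),
    indeg (suppress F v) v' == 1%N & outdeg (suppress F v) v' == 1%N].
  move=> v' Hv'; have Hne : v' != v by apply: contraNneq Hvl => <-.
  have Hv'' : v' \in v :: l by rewrite inE Hv' orbT.
  have /and3P [a b c] := Hl v' Hv''.
  rewrite HV' Hne a /=; have [-> ->] := HD' v' Hne; by rewrite b c.
have [H1 H2 H3 H4] := IH _ HF' Hu Hl'.
split => //.
- by move=> z; rewrite H2 HV' inE negb_or; case: (z \in l); case: (z == v).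
- move=> z; rewrite inE negb_or => /andP [zv zl]; have [-> ->] := H3 z zl; exact: HD' z zv.
- exact: subdiv_trans H4 HS'.
Qed.

Lemma cnt_pos_ex A P : (0 < cnt A P)%N -> exists2 a, a \in A & P a.
Proof.
case: (fset_0Vmem [fset a in A | P a]) => [E|[a Ha]]; first by rewrite /cnt E cardfs0.
by move: Ha; rewrite !inE => /andP [H1 H2] _; exists a.
Qed.
Lemma adm_tree_based (X : finType) N (lbl : X -> nat) E :
  binary_network N lbl -> adm N E -> tree_based N lbl.
Proof.
move=> [[HG [Hinj [Hlv Hlsur]]] Hb] [HEs HEr HEc HEw].
have [He [Hac [[r [Hr1 Hr2]] Ht]]] := HG.
set S0 := DGraph (verts N) (arcs N `\` E).
have memS0 a : (a \in arcs S0) = (a \notin E) && (a \in arcs N) by rewrite /S0 /= in_fsetD.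
have degS z : indeg N z = (indeg S0 z + cnt E (fun a => a.2 == z))%N /\
              outdeg N z = (outdeg S0 z + cnt E (fun a => a.1 == z))%N.
  by rewrite !indegE !outdegE; split; apply: cnt_sub.
have Ein0 z : ~~ is_reticb N z -> cnt E (fun a => a.2 == z) = 0%N.
  move=> Hz; apply/eqP; rewrite cardfs_eq0; apply/eqP/fsetP => a; rewrite !inE.
  apply/negP => /andP [Ha /eqP Ea]; have := HEr a Ha; by rewrite Ea (negbTE Hz).
have Eout z : (0 < cnt E (fun a => a.1 == z))%N -> (0 < outdeg S0 z)%N.
  move/cnt_pos_ex => [[a1 a2] Ha /eqP /= Ea]; rewrite Ea in Ha.
  have [w' /andP [H1 H2]] := HEw _ _ Ha.
  by apply: (@card_pos _ _ (z, w')); rewrite /out_arcs !inE /= eqxx H1 H2.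
have cls z : z \in verts N ->
  [\/ [/\ indeg N z = 0%N, outdeg N z = 1%N, indeg S0 z = 0%N, outdeg S0 z = 1%N &
        cnt E (fun a => a.1 == z) = 0%N],
      [/\ indeg N z = 1%N, outdeg N z = 2%N, indeg S0 z = 1%N, outdeg S0 z = 2%N &
        cnt E (fun a => a.1 == z) = 0%N],
      [/\ indeg N z = 1%N, outdeg N z = 2%N, indeg S0 z = 1%N, outdeg S0 z = 1%N &
        cnt E (fun a => a.1 == z) = 1%N] |
      ([/\ indeg N z = 2%N, outdeg N z = 1%N, indeg S0 z = 1%N, outdeg S0 z = 1%N &
        cnt E (fun a => a.1 == z) = 0%N] \/
      [/\ indeg N z = 1%N, outdeg N z = 0%N, indeg S0 z = 1%N, outdeg S0 z = 0%N &
        cnt E (fun a => a.1 == z) = 0%N])].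
  move=> Hz; have [Di Do] := degS z; have Eo := Eout z.
  case: (node_types HG Hb Hz) => [] [Hi Ho].
  - have Ei : cnt E (fun a => a.2 == z) = 0%N by apply: Ein0; rewrite /is_reticb Hi andbF.
    constructor 1; split; move: Di Do Eo Hi Ho Ei; plia.
  - have Ei : cnt E (fun a => a.2 == z) = 0%N by apply: Ein0; rewrite /is_reticb Hi andbF.
    case: (posnP (cnt E (fun a => a.1 == z))) => Ez.
      constructor 2; split; move: Di Do Eo Hi Ho Ei Ez; plia.
    constructor 3; split; move: Di Do Eo Hi Ho Ei Ez; plia.
  - have Ei : cnt E (fun a => a.2 == z) = 1%N by apply: HEc; rewrite /is_reticb Hz Hi Ho.
    constructor 4; left; split; move: Di Do Eo Hi Ho Ei; plia.
  - have Ei : cnt E (fun a => a.2 == z) = 0%N by apply: Ein0; rewrite /is_reticb Hi andbF.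
    constructor 4; right; split; move: Di Do Eo Hi Ho Ei; plia.
have HS0 : forest S0.
  split.
  - by move=> a; rewrite memS0 => /andP [_ /He].
  - move=> v Hv; apply: (Hac v); apply: (reach_sub _ Hv) => -[a1 a2]; rewrite memS0 => /andP [_ Ha].
    exact: reach_arc.
  - move=> z; case Hz: (z \in verts N).
      by case: (cls z Hz) => [|||[]] [_ _ ->].
    have [Hi0 _] := endpoints_deg He (negbT Hz).
    by have [Di _] := degS z; move: Di Hi0; plia.
set D := [fset z in verts N | (indeg S0 z == 1%N) && (outdeg S0 z == 1%N)].
have memD z : (z \in D) = [&& z \in verts N, indeg S0 z == 1%N & outdeg S0 z == 1%N] by rewrite !inE.
have HlD : forall v, v \in enum_fset D ->
    [&& v \in verts S0, indeg S0 v == 1%N & outdeg S0 v == 1%N].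
  by move=> v Hv; have : v \in D := Hv; rewrite memD.
have [HT HVT HDT HST] := @foldl_supp (enum_fset D) S0 HS0 (fset_uniq D) HlD.
set T := foldl suppress S0 (enum_fset D) in HT HVT HDT HST.
have memT z : (z \in verts T) = (z \notin D) && (z \in verts N) by rewrite HVT.
have Tcls z : z \in verts T ->
  [\/ [/\ indeg N z = 0%N, outdeg N z = 1%N, indeg T z = 0%N & outdeg T z = 1%N],
      [/\ indeg N z = 1%N, outdeg N z = 2%N, indeg T z = 1%N & outdeg T z = 2%N] |
      [/\ indeg N z = 1%N, outdeg N z = 0%N, indeg T z = 1%N & outdeg T z = 0%N]].
  rewrite memT => /andP [zD zN]; have [-> ->] := HDT z zD.
  move: zD; rewrite memD zN /=.
  by case: (cls z zN) => [|||[]] [-> -> -> -> _]; rewrite /= ?eqxx //= => _; [constructor 1|constructor 2|constructor 3].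
have [HTe HTac HTin] := HT.
have HTnr : no_retic T by move=> v; rewrite /is_reticb ltnNge HTin /= andbF.
have HTbt : binary_tree T lbl.
  split; last exact: HTnr.
  split; last first.
    move=> v /orP []; last by rewrite (negbTE (HTnr v)).
    rewrite /is_treenodeb => /andP [/andP [Hv /eqP Hi] Ho].
    by case: (Tcls v Hv) => [] [_ _ Hi' Ho']; move: Hi Ho; rewrite Hi' Ho'.
  split; last split => //; last split.
  - split => //; split => //; split.
      have Hrv : r \in verts T.
        have /andP [/andP [HrN /eqP Hri] _] := Hr1.
        rewrite memT memD HrN /=; case: (cls r HrN) => [|||[]] [Hi _ Hi' _ _]; rewrite ?Hi' //;
          by move: Hri; rewrite Hi.
      exists r; split.
        case: (Tcls r Hrv) => [] [Hi Ho Hi' Ho']; rewrite /is_rootb Hrv Hi' Ho' //;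
          have /andP [/andP [_ /eqP Hri] _] := Hr1; by move: Hri; rewrite Hi.
      move=> v Hv Hi0; apply: Hr2; first by move: Hv; rewrite memT => /andP [].
      by case: (Tcls v Hv) => [] [Hi _ Hi' _] //; move: Hi0; rewrite Hi'.
    move=> v Hv; case: (Tcls v Hv) => [] [_ _ Hi' Ho'].
    + by rewrite /is_rootb Hv Hi' Ho'.
    + by rewrite /is_treenodeb Hv Hi' Ho' orbT.
    + by rewrite /is_leafb Hv Hi' Ho' !orbT.
  - move=> x; have /leafP [Hxv Hxi Hxo] := Hlv x.
    have HxT : lbl x \in verts T.
      rewrite memT memD Hxv /= andbT; case: (cls _ Hxv) => [|||[]] [Hi Ho Hi' Ho' _];
        rewrite ?Ho' ?andbF //; exfalso; move: Hxi Hxo; rewrite Hi Ho; plia.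
    case: (Tcls _ HxT) => [] [Hi Ho Hi' Ho']; rewrite /is_leafb HxT Hi' Ho' //;
      exfalso; move: Hxi Hxo; rewrite Hi Ho; plia.
  - move=> v /leafP [Hv Hi Ho]; apply: Hlsur.
    have HvN : v \in verts N by move: Hv; rewrite memT => /andP [].
    case: (Tcls v Hv) => [] [Hi2 Ho2 Hi' Ho']; rewrite /is_leafb ?HvN ?Hi2 ?Ho2 //;
      exfalso; move: Hi Ho; rewrite Hi' Ho'; plia.
have inAtt z : z \in verts N -> indeg S0 z = 1%N -> outdeg S0 z = 1%N -> z \in verts S0 `\` verts T.
  by move=> Hz Hi Ho; rewrite in_fsetD memT memD Hz Hi Ho /=.
have attD z : z \in verts S0 `\` verts T -> z \in verts N /\ indeg S0 z = 1%N /\ outdeg S0 z = 1%N.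
  rewrite in_fsetD memT => /andP [H1 H2]; rewrite /= in H2; rewrite H2 /= andbT negbK memD in H1.
  by move: H1 => /and3P [_ /eqP -> /eqP ->].
exists T, lbl; split => //; exists S0, E; split; first exact: HST.
move=> att; split.
  move=> [a1 a2] Ha; have HaN := fsubsetP HEs _ Ha; have [H1 H2] := He _ HaN; rewrite /= in H1 H2 *.
  split; last split.
  - have Eo : (0 < cnt E (fun a => a.1 == a1))%N by apply: (@card_pos _ _ (a1, a2)); rewrite !inE Ha /= eqxx.
    by case: (cls a1 H1) => [|||[]] [_ _ Hi Ho Ec]; rewrite ?inAtt //; move: Eo; rewrite Ec.
  - have /reticP [_ Hi Ho] := HEr _ Ha; rewrite /= in Hi Ho.
    case: (cls a2 H2) => [|||[]] [Hi2 Ho2 Hi' Ho' _]; rewrite ?inAtt //;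
      exfalso; move: Hi Ho; rewrite Hi2 Ho2; plia.
  - by rewrite memS0 Ha.
move=> H.
have EH : H = N.
  rewrite /H /S0 /= (dgraph_eta N); congr DGraph; apply/fsetP => a.
  rewrite in_fsetU in_fsetD; case Ha: (a \in E) => /=; last by rewrite orbF.
  by rewrite (fsubsetP HEs _ Ha).
rewrite EH; split.
  move=> v; case Hv: (v \in verts N).
    by case: (node_types HG Hb Hv) => [] [-> ->].
  by have [-> ->] := endpoints_deg He (negbT Hv).
split => // unused.
have Eu : unused = fset0.
  apply/fsetP => z; rewrite /unused !inE; apply/negP => /andP [Hz Hne].
  have Hz' : z \in verts S0 `\` verts T by rewrite in_fsetD.
  have [HzN [Hi Ho]] := attD z Hz'; move/negP: Hne; apply.
  case: (cls z HzN) => [|||[]] [Hi2 Ho2 Hi' Ho' Ec].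
  - by move: Hi; rewrite Hi'.
  - by move: Ho; rewrite Ho'.
  - have [a Ha /eqP Ea] : exists2 a, a \in E & a.1 == z by apply: cnt_pos_ex; rewrite Ec.
    by apply/existsP; exists [` Ha] => /=; rewrite Ea eqxx.
  - have Hr : is_reticb N z by rewrite /is_reticb HzN Hi2 Ho2.
    have [a Ha /eqP Ea] : exists2 a, a \in E & a.2 == z by apply: cnt_pos_ex; rewrite (HEc z Hr).
    by apply/existsP; exists [` Ha] => /=; rewrite Ea eqxx orbT.
  - by move: Ho; rewrite Ho'.
rewrite Eu /=.
exists id; split; first by move=> u v _ _.
split; last by split.
apply/fsetP => z; apply/imfsetP/idP => [[y Hy ->]//|Hz]; by exists z.
Qed.

Theorem mainTheorem6 (X : finType) (N : dgraph) (lbl : X -> nat) :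
  binary_network N lbl -> orchard N lbl -> tree_based N lbl.
Proof.
move=> Hbn [S HS]; move: HS => /= [Hd [Hnr _]].
have [[HG _] Hb] := Hbn.
have [E HE] := orchard_adm HG Hb Hd Hnr.
exact: adm_tree_based Hbn HE.
Qed.
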